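(* For every $\gamma > 0$ and $0 < \alpha < 1$, the following holds for all sufficiently large $n$. Let $G$ be an $(n,(3-\gamma)n)$-multigraph and $M$ a rainbow matching of maximum size in $G$ which has a $7$-auxiliary matching $N$ of size at least $(1-\gamma)|M|$. Then $|N_\alpha| \le \frac{20\gamma}{1-\alpha}\, n$.
   Context: An $(n,v)$-multigraph is a multigraph whose edges are coloured with a set of $n$ colours (parallel edges allowed, with distinct colours) such that each colour class is a vertex-disjoint union of cliques on at least $2$ vertices which together have at least $v$ vertices. A rainbow matching is a matching whose edges have pairwise distinct colours. Let $V$ be the vertex set of $G$ and $C_0$ the set of colours not used on $M$. A $t$-auxiliary matching for $M$ is a matching $N$ each of whose edges has one endpoint in $V\setminus V(M)$ and the other in $V(M)$, such that for each edge of $N$ its pair of endpoints is joined by edges of at least $t$ distinct colours from $C_0$, and no two edges of $N$ intersect the same edge of $M$. $M_N\subseteq M$ is the set of edges of $M$ intersecting an edge of $N$; for $e\in M_N$, $x_e$ is the endpoint of $e$ in $V(N)$, $m(x_e)$ the other endpoint of $e$, and $v_e$ the vertex matched to $x_e$ in $N$; $C_N$ is the set of colours of edges of $M_N$. $N_\alpha \subseteq N$ is the set of edges $v_e x_e \in N$ such that the pair $v_e m(x_e)$ is joined by edges of at most $\alpha |C_N|$ distinct colours from $C_N$. *)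

(* Defs.v *)
From HB Require Import structures.
From mathcomp Require Import all_boot all_order all_algebra.
From mathcomp Require Export reals.
Set Implicit Arguments. Unset Strict Implicit. Unset Printing Implicit Defensive.
Import Order.TTheory GRing.Theory Num.Theory.
Local Open Scope ring_scope.

Section Defs.
Variables (V : finType) (n : nat).

(* A colouring: for each colour c : 'I_n, the family col c of cliques
   (vertex sets) forming colour class c. *)
Implicit Types (col : 'I_n -> {set {set V}}).

Definition nv_multigraph (R : realType) col (v : R) : Prop :=
  forall c : 'I_n,
    [/\ trivIset (col c),
        (forall K, K \in col c -> (2 <= #|K|)%N)
      & v <= (#|cover (col c)|)%:R].

Definition cedge col (c : 'I_n) (x y : V) : bool :=
  (x != y) && [exists K in col c, (x \in K) && (y \in K)].

Definition is_edge col (e : {set V} * 'I_n) : bool :=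
  (#|e.1| == 2)%N && [exists K in col e.2, e.1 \subset K].

Definition is_rainbow_matching col (M : {set {set V} * 'I_n}) : Prop :=
  [/\ forall e, e \in M -> is_edge col e,
      forall e e', e \in M -> e' \in M -> e != e' -> [disjoint e.1 & e'.1]
    & forall e e', e \in M -> e' \in M -> e != e' -> e.2 != e'.2].

Definition is_max_rainbow_matching col (M : {set {set V} * 'I_n}) : Prop :=
  is_rainbow_matching col M /\
  forall M', is_rainbow_matching col M' -> (#|M'| <= #|M|)%N.

Definition VM (M : {set {set V} * 'I_n}) : {set V} := \bigcup_(e in M) e.1.

Definition colsM (M : {set {set V} * 'I_n}) : {set 'I_n} := [set e.2 | e in M].
Definition C0 (M : {set {set V} * 'I_n}) : {set 'I_n} := ~: colsM M.

Definition cols_between col (S : {set 'I_n}) (x y : V) : {set 'I_n} :=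
  [set c in S | cedge col c x y].

Definition aux_matching col (M : {set {set V} * 'I_n}) (t : nat)
    (N : {set {set V}}) : Prop :=
  [/\ forall f, f \in N -> exists u w, [/\ f = [set u; w], u \notin VM M,
                                          w \in VM M
                                        & (t <= #|cols_between col (C0 M) u w|)%N],
      forall f f', f \in N -> f' \in N -> f != f' -> [disjoint f & f']
    & forall f f' e, f \in N -> f' \in N -> e \in M -> f != f' ->
        ~~ ((f :&: e.1 != set0) && (f' :&: e.1 != set0))].

Definition M_N (M : {set {set V} * 'I_n}) (N : {set {set V}}) :=
  [set e in M | [exists f in N, f :&: e.1 != set0]].

Definition C_N (M : {set {set V} * 'I_n}) (N : {set {set V}}) : {set 'I_n} :=
  colsM (M_N M N).

(* N_alpha: edges v_e x_e of N such that v_e m(x_e) is joined by at most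
   alpha |C_N| colours of C_N.  Here e.1 = {x, y}, x = x_e, y = m(x_e),
   v = v_e. *)
Definition N_alpha (R : realType) col (M : {set {set V} * 'I_n})
    (N : {set {set V}}) (alpha : R) : {set {set V}} :=
  [set f in N | [exists e in M_N M N, [exists x, [exists y, [exists v,
      [&& e.1 == [set x; y], x != y, f == [set v; x], v \notin VM M &
          (#|cols_between col (C_N M N) v y|%:R <= alpha * #|C_N M N|%:R)%R]]]]]].

End Defs.

(* Main.v *)
Require Import Defs.
From HB Require Import structures.
From mathcomp Require Import all_boot all_order all_algebra.
From mathcomp Require Import reals.
From mathcomp Require Import zify ring lra.
Import Order.TTheory GRing.Theory Num.Theory.
Set Implicit Arguments. Unset Strict Implicit. Unset Printing Implicit Defensive.

Section Comb.
Variables (V : finType) (n : nat) (col : 'I_n -> {set {set V}}).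
Variables (M : {set {set V} * 'I_n}) (N : {set {set V}}).
Variables (d : V) (de : {set V} * 'I_n).
Hypothesis Htriv : forall c, trivIset (col c).
Hypothesis Hsz : forall c K, K \in col c -> (2 <= #|K|)%N.
Hypothesis HM : is_max_rainbow_matching col M.
Hypothesis HN : aux_matching col M 7 N.

Notation VMM := (VM M).
Definition vN (f : {set V}) := odflt d [pick u in f | u \notin VMM].
Definition xN (f : {set V}) := odflt d [pick u in f | u \in VMM].
Definition eN (f : {set V}) := odflt de [pick e in M | xN f \in e.1].
Definition yN (f : {set V}) := odflt d [pick u in (eN f).1 | u != xN f].
Definition cN (f : {set V}) := (eN f).2.

Lemma cedge_sym c a b : cedge col c a b -> cedge col c b a.
Proof.
rewrite /cedge => /andP[ne /existsP[K /andP[KK /andP[aK bK]]]].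
rewrite eq_sym ne /=; apply/existsP; exists K; by rewrite KK aK bK.
Qed.

Lemma cedge_trans c a b e : cedge col c a b -> cedge col c b e -> a != e ->
  cedge col c a e.
Proof.
move=> /andP[_ /existsP[K /andP[KK /andP[aK bK]]]].
move=> /andP[_ /existsP[K' /andP[KK' /andP[bK' eK']]]] ne.
rewrite /cedge ne /=; apply/existsP; exists K; rewrite KK aK /=.
have [eKK|neK] := eqVneq K K'; first by rewrite eKK.
have := trivIsetP (Htriv c) K K' KK KK' neK.
by move/disjointFr => /(_ _ bK); rewrite bK'.
Qed.

Lemma cover_nb c t : t \in cover (col c) -> exists w, cedge col c t w.
Proof.
move=> /bigcupP[K KK tK].
have : (1 < #|K|)%N by exact: Hsz KK.
rewrite (cardsD1 t K) tK ltnS card_gt0 => /set0Pn[w].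
rewrite !inE => /andP[wt wK]; exists w.
rewrite /cedge eq_sym wt /=; apply/existsP; exists K; by rewrite KK tK wK.
Qed.

Lemma VMP x : reflect (exists2 e, e \in M & x \in e.1) (x \in VMM).
Proof. apply: (iffP bigcupP) => [[e ? ?]|[e ? ?]]; by exists e. Qed.

Lemma HMe e : e \in M -> is_edge col e.
Proof. by case: HM => [[H1 H2 H3] _]; auto. Qed.
Lemma HMd e e' : e \in M -> e' \in M -> e != e' -> [disjoint e.1 & e'.1].
Proof. by case: HM => [[H1 H2 H3] _]; auto. Qed.
Lemma HMc e e' : e \in M -> e' \in M -> e != e' -> e.2 != e'.2.
Proof. by case: HM => [[H1 H2 H3] _]; auto. Qed.

Lemma M_inj_v e e' x : e \in M -> e' \in M -> x \in e.1 -> x \in e'.1 -> e = e'.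
Proof.
move=> eM e'M xe xe'; apply/eqP; apply/negPn/negP => ne.
by have := HMd eM e'M ne => /disjointFr /(_ xe); rewrite xe'.
Qed.

Section OnN.
Variable f : {set V}.
Hypothesis fN : f \in N.

Lemma fshape : exists u w, [/\ f = [set u; w], u \notin VMM, w \in VMM
   & (7 <= #|cols_between col (C0 M) u w|)%N].
Proof. by case: HN => H _ _; exact: H. Qed.

Lemma vN_prop : [/\ f = [set vN f; xN f], vN f \notin VMM, xN f \in VMM
   & (7 <= #|cols_between col (C0 M) (vN f) (xN f)|)%N].
Proof.
have [u [w [-> uV wV H7]]] := fshape.
have ->: vN [set u; w] = u.
  rewrite /vN; case: pickP => [z|/(_ u)]; last by rewrite !inE eqxx uV.
  by rewrite !inE => /andP[/orP[/eqP->//|/eqP->]]; rewrite wV.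
have ->: xN [set u; w] = w.
  rewrite /xN; case: pickP => [z|/(_ w)]; last by rewrite !inE eqxx wV orbT.
  by rewrite !inE => /andP[/orP[/eqP->|/eqP->//]]; rewrite (negbTE uV).
by [].
Qed.

Lemma vN_notin : vN f \notin VMM. Proof. by case: vN_prop. Qed.
Lemma xN_in : xN f \in VMM. Proof. by case: vN_prop. Qed.
Lemma f_eq : f = [set vN f; xN f]. Proof. by case: vN_prop. Qed.
Lemma vx_ne : vN f != xN f.
Proof. by apply/eqP => e; have := vN_notin; rewrite e xN_in. Qed.

Lemma eN_prop : eN f \in M /\ xN f \in (eN f).1.
Proof.
rewrite /eN; case: pickP => [e /andP[]//|].
have /VMP[e eM xe] := xN_in => /(_ e); by rewrite eM xe.
Qed.
Lemma eN_in : eN f \in M. Proof. by case: eN_prop. Qed.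
Lemma xN_eN : xN f \in (eN f).1. Proof. by case: eN_prop. Qed.

Lemma xN_f : xN f \in f.
Proof. by rewrite {2}f_eq !inE eqxx orbT. Qed.
Lemma vN_f : vN f \in f.
Proof. by rewrite {2}f_eq !inE eqxx. Qed.

Lemma yN_prop : (eN f).1 = [set xN f; yN f] /\ yN f != xN f.
Proof.
have := HMe eN_in => /andP[/cards2P[a [b [ab eab]]] _].
have := xN_eN; rewrite eab !inE => /orP[]/eqP xe.
- have ey: yN f = b.
    rewrite /yN eab xe; case: pickP => [z|/(_ b)]; last by rewrite !inE eqxx orbT eq_sym ab.
    by rewrite !inE => /andP[/orP[/eqP->|/eqP->//]]; rewrite eqxx.
  by rewrite ey xe eq_sym ab.
- have ey: yN f = a.
    rewrite /yN eab xe; case: pickP => [z|/(_ a)]; last by rewrite !inE eqxx ab.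
    by rewrite !inE => /andP[/orP[/eqP->//|/eqP->]]; rewrite eqxx.
  by rewrite ey xe ab setUC.
Qed.
Lemma yN_eN : yN f \in (eN f).1. Proof. by rewrite (proj1 yN_prop) !inE eqxx orbT. Qed.
Lemma yx_ne : yN f != xN f. Proof. by case: yN_prop. Qed.
Lemma yN_in : yN f \in VMM. Proof. by apply/VMP; exists (eN f); [exact: eN_in|exact: yN_eN]. Qed.

End OnN.

Lemma eN_inj f g : f \in N -> g \in N -> f != g -> eN f != eN g.
Proof.
move=> fN gN fg; apply/eqP => e.
case: HN => _ _ /(_ f g (eN f) fN gN (eN_in fN) fg).
have xf: xN f \in f :&: (eN f).1 by rewrite inE xN_eN // xN_f.
have xg: xN g \in g :&: (eN f).1 by rewrite inE e xN_eN // xN_f.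
by move/negP; apply; apply/andP; split; apply/set0Pn; [exists (xN f)|exists (xN g)].
Qed.

Lemma cN_inj f g : f \in N -> g \in N -> f != g -> cN f != cN g.
Proof. move=> fN gN fg; exact: HMc (eN_in fN) (eN_in gN) (eN_inj fN gN fg). Qed.

Lemma eN_disj f g : f \in N -> g \in N -> f != g -> [disjoint (eN f).1 & (eN g).1].
Proof. move=> fN gN fg; exact: HMd (eN_in fN) (eN_in gN) (eN_inj fN gN fg). Qed.

Lemma eN_disj_v f g z : f \in N -> g \in N -> f != g -> z \in (eN f).1 -> z \in (eN g).1 -> False.
Proof. by move=> fN gN fg zf; rewrite (disjointFr (eN_disj fN gN fg) zf). Qed.

Lemma xx_ne f g : f \in N -> g \in N -> f != g -> xN f != xN g.
Proof. by move=> fN gN fg; apply/eqP => e; apply: (eN_disj_v fN gN fg (xN_eN fN)); rewrite e xN_eN. Qed.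
Lemma yy_ne f g : f \in N -> g \in N -> f != g -> yN f != yN g.
Proof. by move=> fN gN fg; apply/eqP => e; apply: (eN_disj_v fN gN fg (yN_eN fN)); rewrite e yN_eN. Qed.
Lemma xy_ne f g : f \in N -> g \in N -> xN f != yN g.
Proof.
move=> fN gN; have [<-|fg] := eqVneq f g; first by rewrite eq_sym yx_ne.
by apply/eqP => e; apply: (eN_disj_v fN gN fg (xN_eN fN)); rewrite e yN_eN.
Qed.
Lemma vv_ne f g : f \in N -> g \in N -> f != g -> vN f != vN g.
Proof.
move=> fN gN fg; apply/eqP => e.
case: HN => _ /(_ f g fN gN fg) + _ => /disjointFr.
by move=> /(_ (vN f) (vN_f fN)); rewrite e vN_f.
Qed.
Lemma vU f : f \in N -> vN f \notin VMM. Proof. exact: vN_notin. Qed.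
Lemma notVM_ne u z : u \notin VMM -> z \in VMM -> u != z.
Proof. by move=> uV zV; apply/eqP => e; move: uV; rewrite e zV. Qed.

Lemma eN_other_x f e : f \in N -> e \in M -> e != eN f -> xN f \notin e.1.
Proof.
move=> fN eM ne; apply/negP => xe.
by move/negP: ne; apply; apply/eqP; exact: M_inj_v eM (eN_in fN) xe (xN_eN fN).
Qed.
Lemma eN_other f e z : f \in N -> e \in M -> e != eN f -> z \in (eN f).1 -> z \notin e.1.
Proof.
move=> fN eM ne zf; apply/negP => xe.
by move/negP: ne; apply; apply/eqP; exact: M_inj_v eM (eN_in fN) xe zf.
Qed.


Definition compat (e e' : {set V} * 'I_n) := [disjoint e.1 & e'.1] && (e.2 != e'.2).

Lemma compat_sym e e' : compat e e' -> compat e' e.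
Proof. by rewrite /compat disjoint_sym eq_sym. Qed.

Lemma rm_union (S T : {set {set V} * 'I_n}) : is_rainbow_matching col S -> is_rainbow_matching col T ->
  (forall e e', e \in S -> e' \in T -> compat e e') ->
  is_rainbow_matching col (S :|: T).
Proof.
move=> [S1 S2 S3] [T1 T2 T3] ST; split.
- by move=> e; rewrite inE => /orP[]; [exact: S1|exact: T1].
- move=> e e'; rewrite !inE => /orP[]eS /orP[]e'S ne.
  + exact: S2. + by case/andP: (ST _ _ eS e'S).
  + by case/andP: (compat_sym (ST _ _ e'S eS)). + exact: T2.
- move=> e e'; rewrite !inE => /orP[]eS /orP[]e'S ne.
  + exact: S3. + by case/andP: (ST _ _ eS e'S).
  + by case/andP: (compat_sym (ST _ _ e'S eS)). + exact: T3.
Qed.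

Lemma edge_nonempty e : is_edge col e -> e.1 != set0.
Proof. by case/andP => /eqP c2 _; apply/eqP => e0; move: c2; rewrite e0 cards0. Qed.

Lemma rm_card_union (S T : {set {set V} * 'I_n}) : is_rainbow_matching col S ->
  (forall e e', e \in S -> e' \in T -> compat e e') ->
  #|S :|: T| = (#|S| + #|T|)%N.
Proof.
move=> [S1 _ _] ST; rewrite -cardsUI.
suff ->: S :&: T = set0 by rewrite cards0 addn0.
apply/setP => e; rewrite !inE; apply/negP => /andP[eS eT].
have /andP[dis _] := ST e e eS eT.
have /set0Pn[x xe] := edge_nonempty (S1 e eS).
by have := disjointFr dis xe; rewrite xe.
Qed.

Lemma cedge_edge c u w : cedge col c u w -> is_edge col ([set u; w], c).
Proof.
case/andP => ne /existsP[K /andP[KK /andP[uK wK]]].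
rewrite /is_edge /= cards2 ne eqxx /=; apply/existsP; exists K.
by rewrite KK; apply/subsetP => z; rewrite !inE => /orP[]/eqP->.
Qed.

Lemma rot_colours k : forall R : {set {set V}}, #|R| = k -> R \subset N -> (k <= 7)%N ->
  exists a : {set V} -> 'I_n,
    (forall f, f \in R -> a f \in C0 M /\ cedge col (a f) (vN f) (xN f)) /\
    {in R &, injective a}.
Proof.
elim: k => [|k IH] R cR sRN k7.
  exists (fun _ => de.2); split => [f|f g]; by rewrite (card0_eq cR) inE.
have /set0Pn[f fR]: R != set0 by rewrite -card_gt0 cR.
have fN : f \in N by exact: (subsetP sRN).
have cR' : #|R :\ f| = k by move: cR; rewrite (cardsD1 f R) fR => -[].
have [a' [Ha' Ia']] := IH (R :\ f) cR' (subset_trans (subsetDl _ _) sRN) (ltnW k7).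
set av := cols_between col (C0 M) (vN f) (xN f) :\: (a' @: (R :\ f)).
have : (0 < #|av|)%N.
  have h1 := leq_imset_card a' (R :\ f); rewrite cR' in h1.
  have h2 : (7 <= #|cols_between col (C0 M) (vN f) (xN f)|)%N by case: (vN_prop fN).
  rewrite /av cardsD.
  have h4 := subset_leq_card (subsetIr (cols_between col (C0 M) (vN f) (xN f)) (a' @: (R :\ f))).
  rewrite subn_gt0; apply: leq_ltn_trans h4 _; apply: leq_ltn_trans h1 _; exact: leq_trans k7 h2.
rewrite card_gt0 => /set0Pn[c]; rewrite /av inE => /andP[cnot]; rewrite /cols_between inE => /andP[cC0 ced].
exists (fun g => if g == f then c else a' g); split.
  move=> g gR; case: (g =P f) => [->|/eqP gf]; first by split.
  by apply: Ha'; rewrite !inE gf.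
move=> g g' gR g'R /=; case: eqP => [->|/eqP gf]; case: eqP => [->//|/eqP g'f].
- move=> e; move: cnot; rewrite e; case/negP; apply/imsetP; exists g' => //; by rewrite !inE g'f.
- move=> e; move: cnot; rewrite -e; case/negP; apply/imsetP; exists g => //; by rewrite !inE gf.
- by apply: Ia'; rewrite !inE ?gf ?g'f.
Qed.


Lemma disjP (A B : {set V}) : (forall z, z \in A -> z \in B -> False) -> [disjoint A & B].
Proof. by move=> H; apply/pred0P => z /=; apply/negP => /andP[zA zB]; exact: H zA zB. Qed.

Lemma rm_sub (S T : {set {set V} * 'I_n}) : S \subset T -> is_rainbow_matching col T ->
  is_rainbow_matching col S.
Proof.
move=> /subsetP sST [T1 T2 T3]; split => [e eS|e e' eS e'S|e e' eS e'S]; auto.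
Qed.

Lemma aug (D R : {set {set V}}) (A : {set {set V} * 'I_n}) :
  D \subset N -> R \subset D -> (#|R| <= 7)%N ->
  is_rainbow_matching col A ->
  (forall a, a \in A -> forall z, z \in a.1 -> z \notin VMM \/ exists2 f, f \in D & z \in (eN f).1) ->
  (forall a, a \in A -> forall f, f \in R -> (vN f \notin a.1) && (xN f \notin a.1)) ->
  (forall a, a \in A -> exists2 f, f \in D & a.2 = cN f) ->
  (#|D| < #|A| + #|R|)%N -> False.
Proof.
move=> sDN sRD R7 rA Av Aav Ac lt.
have sRN := subset_trans sRD sDN.
have [a [Ha Ia]] := rot_colours (erefl #|R|) sRN R7.
set Rot := [set ([set vN f; xN f], a f) | f in R].
set E := [set eN f | f in D].
set M1 := M :\: E.
have rM : is_rainbow_matching col M by case: HM.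
have rM1 : is_rainbow_matching col M1 by apply: rm_sub rM; exact: subsetDl.
have rRot : is_rainbow_matching col Rot.
  split.
  - by move=> e /imsetP[f fR ->]; apply: cedge_edge; case: (Ha f fR).
  - move=> e e' /imsetP[f fR ->] /imsetP[g gR ->] ne.
    have fg : f != g by apply: contraNneq ne => ->.
    have fN := subsetP sRN f fR; have gN := subsetP sRN g gR.
    rewrite /= disjoint_sym; apply: disjP => z; rewrite !inE => /orP[]/eqP-> /orP[]/eqP e1.
    + by move: (vv_ne fN gN fg); rewrite e1 eqxx.
    + by move: (notVM_ne (vN_notin gN) (xN_in fN)); rewrite e1 eqxx.
    + by move: (notVM_ne (vN_notin fN) (xN_in gN)); rewrite e1 eqxx.
    + by move: (xx_ne fN gN fg); rewrite e1 eqxx.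
  - move=> e e' /imsetP[f fR ->] /imsetP[g gR ->] ne.
    have fg : f != g by apply: contraNneq ne => ->.
    by apply/eqP => /Ia => /(_ fR gR) eq; move: fg; rewrite eq eqxx.
have cM1Rot : forall e e', e \in M1 -> e' \in Rot -> compat e e'.
  move=> e e'; rewrite inE => /andP[eE eM] /imsetP[f fR ->].
  have fD := subsetP sRD f fR; have fN := subsetP sDN f fD.
  have neE : e != eN f by apply: contraNneq eE => ->; apply/imsetP; exists f.
  apply/andP; split.
  - rewrite disjoint_sym; apply: disjP => z; rewrite !inE => /orP[]/eqP-> ze.
    + by move: (vN_notin fN); rewrite (_ : vN f \in VMM) //; apply/VMP; exists e.
    + by move: (eN_other_x fN eM neE); rewrite ze.
  - have := (proj1 (Ha f fR)); rewrite /C0 inE => H; apply/eqP => /= e2; move: H.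
    by rewrite -e2; case/negP; apply/imsetP; exists e.
have rM1Rot := rm_union rM1 rRot cM1Rot.
have cA : forall e e', e \in M1 :|: Rot -> e' \in A -> compat e e'.
  move=> e e'; rewrite inE => /orP[]; last first.
    move=> /imsetP[f fR ->] e'A.
    have fN := subsetP sRN f fR.
    apply/andP; split.
    - apply: disjP => z; rewrite !inE => /orP[]/eqP-> ze';
        have /andP[h1 h2] := Aav e' e'A f fR; [by rewrite ze' in h1|by rewrite ze' in h2].
    - have [g gD ->] := Ac e' e'A.
      have := (proj1 (Ha f fR)); rewrite /C0 inE => H; apply/eqP => /= e2; move: H.
      by rewrite e2; case/negP; apply/imsetP; exists (eN g) => //; apply: eN_in; exact: (subsetP sDN).
  rewrite inE => /andP[eE eM] e'A.
  apply/andP; split.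
  - rewrite disjoint_sym; apply: disjP => z ze' ze.
    case: (Av e' e'A z ze') => [zV|[g gD zg]].
      by move: zV; rewrite (_ : z \in VMM) //; apply/VMP; exists e.
    have gN := subsetP sDN g gD.
    have neE : e != eN g by apply: contraNneq eE => ->; apply/imsetP; exists g.
    by move: (eN_other gN eM neE zg); rewrite ze.
  - have [g gD ->] := Ac e' e'A; have gN := subsetP sDN g gD.
    have neE : e != eN g by apply: contraNneq eE => ->; apply/imsetP; exists g.
    exact: HMc eM (eN_in gN) neE.
have rAll := rm_union rM1Rot rA cA.
have card1 := rm_card_union rM1Rot cA.
have card2 := rm_card_union rM1 cM1Rot.
have cE : #|E| = #|D|.
  apply: card_in_imset => f g fD gD e; apply/eqP; apply/negPn/negP => fg.
  by move: (eN_inj (subsetP sDN f fD) (subsetP sDN g gD) fg); rewrite e eqxx.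
have cRot : #|Rot| = #|R|.
  apply: card_in_imset => f g fR gR [e1 e2]; apply/eqP; apply/negPn/negP => fg.
  have fN := subsetP sRN f fR; have gN := subsetP sRN g gR.
  have : vN f \in [set vN g; xN g] by rewrite -e1 !inE eqxx.
  rewrite !inE => /orP[]/eqP e3.
  + by move: (vv_ne fN gN fg); rewrite e3 eqxx.
  + by move: (notVM_ne (vN_notin fN) (xN_in gN)); rewrite e3 eqxx.
have sEM : E \subset M by apply/subsetP => e /imsetP[f fD ->]; apply: eN_in; exact: (subsetP sDN).
have cM1 : #|M1| = (#|M| - #|E|)%N by rewrite cardsD (setIidPr sEM).
have cEM := subset_leq_card sEM.
have := (proj2 HM) _ rAll.
rewrite card1 card2 cM1 cRot cE; rewrite cE in cEM.
move: lt cEM; clear; lia.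
Qed.


Lemma rm_single c u w : cedge col c u w -> is_rainbow_matching col [set ([set u; w], c)].
Proof.
move=> ce; split => [e|e e'|e e']; rewrite ?inE.
- by move/eqP->; exact: cedge_edge.
- by move=> /eqP-> /eqP->; rewrite eqxx.
- by move=> /eqP-> /eqP->; rewrite eqxx.
Qed.

Lemma rm_pair c c' u w u' w' : cedge col c u w -> cedge col c' u' w' -> c != c' ->
  [disjoint [set u; w] & [set u'; w']] ->
  is_rainbow_matching col [set ([set u; w], c); ([set u'; w'], c')].
Proof.
move=> ce ce' cc dis; split => [e|e e'|e e']; rewrite ?inE.
- by move=> /orP[]/eqP->; apply: cedge_edge.
- move=> /orP[]/eqP-> /orP[]/eqP-> //=; rewrite ?eqxx //= => _.
  by rewrite disjoint_sym.
- move=> /orP[]/eqP-> /orP[]/eqP-> //=; rewrite ?eqxx //= => _.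
  by rewrite eq_sym.
Qed.

Lemma card_pair (c c' : 'I_n) (s s' : {set V}) : c != c' -> #|[set (s, c); (s', c')]| = 2.
Proof. by move=> cc; rewrite cards2; case: eqP => // -[]; move/eqP: cc. Qed.

Lemma notVM_v z : (z \notin VMM) -> forall f, f \in N -> xN f != z.
Proof. by move=> zV f fN; rewrite eq_sym; apply: notVM_ne zV (xN_in fN). Qed.

Lemma yN_v f g : f \in N -> g \in N -> vN g != yN f.
Proof. by move=> fN gN; apply: notVM_ne (vN_notin gN) (yN_in fN). Qed.

Lemma card3_le (a b c : {set V}) : (#|[set a; b; c]| <= 3)%N.
Proof.
apply: leq_trans (card_size [:: a; b; c]); apply: subset_leq_card.
by apply/subsetP => x; rewrite !inE => /orP[/orP[]|]/eqP->; rewrite ?in_cons eqxx ?orbT.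
Qed.
Lemma card4_le (a b c e : {set V}) : (#|[set a; b; c; e]| <= 4)%N.
Proof.
apply: leq_trans (card_size [:: a; b; c; e]); apply: subset_leq_card.
by apply/subsetP => x; rewrite !inE => /orP[/orP[/orP[]|]|]/eqP->; rewrite ?in_cons eqxx ?orbT.
Qed.

Lemma P1 f g h : f \in N -> g \in N -> h \in N -> f != g ->
  cedge col (cN h) (yN f) (yN g) -> False.
Proof.
move=> fN gN hN fg ce.
set D := [set f; g; h].
have sD : D \subset N by apply/subsetP => z; rewrite !inE => /orP[/orP[]|]/eqP->.
apply: (aug sD (subxx _) (leq_trans (card3_le f g h) _) (rm_single ce)) => //.
- move=> a; rewrite inE => /eqP-> z /=; rewrite !inE => /orP[]/eqP->; right.
  + by exists f; [rewrite !inE eqxx|exact: yN_eN].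
  + by exists g; [rewrite !inE eqxx orbT|exact: yN_eN].
- move=> a; rewrite inE => /eqP-> r rD /=; have rN := subsetP sD r rD.
  by rewrite !inE !negb_or (yN_v fN rN) (yN_v gN rN) (xy_ne rN fN) (xy_ne rN gN).
- by move=> a; rewrite inE => /eqP->; exists h => //; rewrite !inE eqxx !orbT.
- by rewrite cards1.
Qed.

Lemma P2 f h u : f \in N -> h \in N -> u \notin VMM ->
  cedge col (cN h) (yN f) u -> u = vN f \/ u = vN h.
Proof.
move=> fN hN uV ce.
case: (eqVneq u (vN f)) => [->|uf]; first by left.
case: (eqVneq u (vN h)) => [->|uh]; first by right.
exfalso.
set D := [set f; h].
have sD : D \subset N by apply/subsetP => z; rewrite !inE => /orP[]/eqP->.
apply: (aug sD (subxx _) _ (rm_single ce)) => //.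
- by rewrite cards2; case: (_ != _).
- move=> a; rewrite inE => /eqP-> z /=; rewrite !inE => /orP[]/eqP->.
  + by right; exists f; [rewrite !inE eqxx|exact: yN_eN].
  + by left.
- move=> a; rewrite inE => /eqP-> r rD /=; have rN := subsetP sD r rD.
  move: rD; rewrite !inE !negb_or (yN_v fN rN) (xy_ne rN fN) (notVM_v uV rN) /= andbT.
  by case/orP=> /eqP->; rewrite eq_sym.
- by move=> a; rewrite inE => /eqP->; exists h => //; rewrite !inE eqxx !orbT.
- by rewrite cards1.
Qed.

Lemma P3 h u u' : h \in N -> u \notin VMM -> u' \notin VMM ->
  cedge col (cN h) u u' -> u = vN h \/ u' = vN h.
Proof.
move=> hN uV uV' ce.
case: (eqVneq u (vN h)) => [->|uh]; first by left.
case: (eqVneq u' (vN h)) => [->|uh']; first by right.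
exfalso.
set D := [set h].
have sD : D \subset N by apply/subsetP => z; rewrite !inE => /eqP->.
apply: (aug sD (subxx _) _ (rm_single ce)) => //.
- by rewrite cards1.
- by move=> a; rewrite inE => /eqP-> z /=; rewrite !inE => /orP[]/eqP->; left.
- move=> a; rewrite inE => /eqP-> r rD /=; move: rD; rewrite inE => /eqP->.
  by rewrite !inE !negb_or (notVM_v uV hN) (notVM_v uV' hN) eq_sym uh eq_sym uh'.
- by move=> a; rewrite inE => /eqP->; exists h => //; rewrite !inE eqxx.
- by rewrite !cards1.
Qed.


Lemma P4core (D : {set {set V}}) g h k w : D \subset N -> g \in D -> h \in D -> k \in D -> (#|D| <= 4)%N ->
  h != k -> cedge col (cN h) (xN g) w -> cedge col (cN k) (yN g) (vN g) ->
  w != vN g -> w != yN g -> w != xN g ->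
  (w \notin VMM \/ exists2 g', g' \in D & w \in (eN g').1) ->
  (forall r, r \in D -> r != g -> (vN r != w) && (xN r != w)) -> False.
Proof.
move=> sD gD hD kD D4 hk ce1 ce2 wvg wyg wxg wsrc wR.
have gN := subsetP sD g gD; have hN := subsetP sD h hD; have kN := subsetP sD k kD.
have dis : [disjoint [set xN g; w] & [set yN g; vN g]].
  apply: disjP => z; rewrite !inE => /orP[]/eqP-> /orP[]/eqP e.
  - by move: (yx_ne gN); rewrite e eqxx.
  - by move: (vx_ne gN); rewrite e eqxx.
  - by move: wyg; rewrite e eqxx.
  - by move: wvg; rewrite e eqxx.
apply: (@aug D (D :\ g) _ sD (subsetDl _ _) _ (rm_pair ce1 ce2 (cN_inj hN kN hk) dis)).
- apply: leq_trans (subset_leq_card (subsetDl D [set g])) _; exact: leq_trans D4 _.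
- move=> a; rewrite !inE => /orP[]/eqP-> z /=; rewrite !inE => /orP[]/eqP->.
  + by right; exists g => //; exact: xN_eN.
  + exact: wsrc.
  + by right; exists g => //; exact: yN_eN.
  + by left; exact: vN_notin.
- move=> a; rewrite !inE => /orP[]/eqP-> r; rewrite !inE => /andP[rg rD] /=; have rN := subsetP sD r rD;
  have /andP[h1 h2] := wR r rD rg; rewrite !negb_or ?h1 ?h2 ?andbT.
  + by rewrite (notVM_ne (vN_notin rN) (xN_in gN)) (xx_ne rN gN rg).
  + have e1 : xN r != vN g by rewrite eq_sym (notVM_ne (vN_notin gN) (xN_in rN)).
    by rewrite (yN_v gN rN) (vv_ne rN gN rg) (xy_ne rN gN) e1.
- move=> a; rewrite !inE => /orP[]/eqP->; by [exists h|exists k].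
- rewrite card_pair ?(cN_inj hN kN hk) //.
  by rewrite (cardsD1 g D) gD add1n ltnS.
Qed.

Lemma P4a g h k w : g \in N -> h \in N -> k \in N -> h != k -> w \notin VMM ->
  w != vN g -> w != vN h -> w != vN k ->
  cedge col (cN h) (xN g) w -> cedge col (cN k) (yN g) (vN g) -> False.
Proof.
move=> gN hN kN hk wV wg wh wk ce1 ce2.
set D := [set g; h; k].
have sD : D \subset N by apply/subsetP => z; rewrite !inE => /orP[/orP[]|]/eqP->.
apply: (@P4core D g h k w sD) => //.
- by rewrite !inE eqxx.
- by rewrite !inE eqxx orbT.
- by rewrite !inE eqxx orbT.
- exact: leq_trans (card3_le _ _ _) _.
- exact: notVM_ne wV (yN_in gN).
- exact: notVM_ne wV (xN_in gN).
- by left.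
- move=> r; rewrite !inE => /orP[/orP[]|]/eqP-> rg; rewrite ?eqxx // in rg.
  + by rewrite eq_sym wh eq_sym (notVM_ne wV (xN_in hN)).
  + by rewrite eq_sym wk eq_sym (notVM_ne wV (xN_in kN)).
Qed.

Lemma P4b g h k g' : g \in N -> h \in N -> k \in N -> g' \in N -> h != k -> g' != g ->
  cedge col (cN h) (xN g) (yN g') -> cedge col (cN k) (yN g) (vN g) -> False.
Proof.
move=> gN hN kN g'N hk g'g ce1 ce2.
set D := [set g; h; k; g'].
have sD : D \subset N by apply/subsetP => z; rewrite !inE => /orP[/orP[/orP[]|]|]/eqP->.
apply: (@P4core D g h k (yN g') sD) => //.
- by rewrite !inE eqxx.
- by rewrite !inE eqxx orbT.
- by rewrite !inE eqxx orbT.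
- exact: card4_le.
- by rewrite eq_sym yN_v.
- exact: yy_ne.
- by rewrite eq_sym xy_ne.
- by right; exists g'; [rewrite !inE eqxx orbT|exact: yN_eN].
- move=> r rD rg; have rN := subsetP sD r rD.
  by rewrite yN_v // xy_ne.
Qed.


Lemma cardU_le (T : finType) (A B : {set T}) : (#|A :|: B| <= #|A| + #|B|)%N.
Proof. by rewrite cardsU leq_subr. Qed.

Lemma card_le1 (T : finType) (A : {set T}) : (forall x y, x \in A -> y \in A -> x = y) -> (#|A| <= 1)%N.
Proof. by move=> H; apply/card_le1_eqP => x y xA yA; apply: H. Qed.

Definition Xs := xN @: N.
Definition Ys := yN @: N.
Definition Zs := VMM :\: (Xs :|: Ys).
Definition Good h := [set f in N | cedge col (cN h) (yN f) (vN f)].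
Definition Bad h := N :\: Good h.
Definition G4 h := [set g in Good h | [exists w, cedge col (cN h) (xN g) w &&
   (((w \notin VMM) && (w != vN g) && (w != vN h)) || ((w \in Ys) && (w != yN g)))]].

Lemma XsP z : reflect (exists2 f, f \in N & z = xN f) (z \in Xs).
Proof. exact: imsetP. Qed.

Lemma YsP z : reflect (exists2 f, f \in N & z = yN f) (z \in Ys).
Proof. exact: imsetP. Qed.

Lemma cedge_irr c z : ~~ cedge col c z z.
Proof. by rewrite /cedge eqxx. Qed.

Section Count.
Variable h : {set V}.
Hypothesis hN : h \in N.
Let c := cN h.
Let P := cover (col c).
Let TU := [set t in P | (t \notin VMM) && (t \notin vN @: Good h)].
Let TY := [set t in P | t \in yN @: Bad h].
Let T := TU :|: TY.
Let S := [set t | (t == vN h) || cedge col c t (vN h)].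
Let psi t := odflt d [pick w | cedge col c t w].

Lemma psiP t : t \in P -> cedge col c t (psi t).
Proof.
move=> /cover_nb[w ce]; rewrite /psi; case: pickP => [z //|/(_ w)]; by rewrite ce.
Qed.

Lemma TS_le : (#|T :&: S| <= 3)%N.
Proof.
set SU := [set t | (t \notin VMM) && (t != vN h) && cedge col c t (vN h)].
set SY := [set t in Ys | cedge col c t (vN h)].
have sub : T :&: S \subset [set vN h] :|: SU :|: SY.
  apply/subsetP => t; rewrite !inE => /andP[/orP[]/andP[tP tT] /orP[/eqP->|ce]]; rewrite ?eqxx //.
  - case/andP: tT => tV _.
    by case: (t =P vN h) => [->|/eqP tv]; rewrite ?eqxx // tV ce.
  - case/imsetP: tT ce => f /setDP[fN _] -> ce; rewrite ce andbT.
    by apply/orP; right; rewrite andbT; apply/YsP; exists f.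
have h1 : (#|SU| <= 1)%N.
  apply: card_le1 => x y; rewrite !inE => /andP[/andP[xV xh] cx] /andP[/andP[yV yh] cy].
  apply/eqP; apply/negPn/negP => xy.
  have cxy : cedge col c x y := cedge_trans cx (cedge_sym cy) xy.
  by case: (P3 hN xV yV cxy) => e; [move: xh|move: yh]; rewrite e eqxx.
have h2 : (#|SY| <= 1)%N.
  apply: card_le1 => x y; rewrite !inE => /andP[/YsP[f fN ->] cx] /andP[/YsP[g gN ->] cy].
  case: (eqVneq f g) => [->//|fg]; exfalso.
  exact: (P1 fN gN hN fg (cedge_trans cx (cedge_sym cy) (yy_ne fN gN fg))).
apply: leq_trans (subset_leq_card sub) _.
apply: leq_trans (cardU_le _ _) _; rewrite -(addn1 2); apply: leq_add h2.
apply: leq_trans (cardU_le _ _) _; rewrite cards1 -(addn1 1) addnC; exact: leq_add h1 _.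
Qed.



Lemma TSP t : t \in T :\: S ->
  [/\ t \in P, t != vN h, ~~ cedge col c t (vN h) &
    (((t \notin VMM) && (t \notin vN @: Good h)) \/
     exists2 f, f \in N & [/\ f \notin Good h, ~~ cedge col c (yN f) (vN f) & t = yN f])].
Proof.
rewrite !inE negb_or => /andP[/andP[tv tc] /orP[/and3P[tP tV tG]|/andP[tP tT]]].
  by split => //; left; rewrite tV tG.
case/imsetP: tT => f /setDP[fN fG] e; split => //; right; exists f => //; split => //.
by move: fG; rewrite inE fN.
Qed.

Lemma nbr_prop t w : t \in T :\: S -> cedge col c t w ->
  [/\ w \in VMM, w \notin Ys &
      forall g, g \in N -> w = xN g -> g \in Bad h \/ g \in G4 h].
Proof.
move=> /TSP[tP th tch tT] ce.
have G4I g w' : g \in Good h -> cedge col c (xN g) w' ->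
    (((w' \notin VMM) && (w' != vN g) && (w' != vN h)) || ((w' \in Ys) && (w' != yN g))) ->
    g \in G4 h.
  by move=> gG ce' cond; rewrite inE gG /=; apply/existsP; exists w'; rewrite ce'.
case: tT => [/andP[tV tG]|[f fN [fG fce et]]]; last subst t.
- split.
  + apply/negPn/negP => wV.
    by case: (P3 hN tV wV ce) => e; [move: th; rewrite e eqxx|move: tch; rewrite -e ce].
  + apply/negP => /YsP[g gN we]; rewrite we in ce.
    case: (P2 gN hN tV (cedge_sym ce)) => e.
    * move: tG; rewrite e; case/negP; apply/imsetP; exists g => //.
      by rewrite inE gN -e (cedge_sym ce).
    * by move: th; rewrite e eqxx.
  + move=> g gN we; rewrite we in ce.
    case: (boolP (g \in Good h)) => gG; last by left; rewrite inE gN gG.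
    right; apply: (G4I g t gG (cedge_sym ce)); rewrite tV th andbT /=.
    apply/orP; left; apply/negP => /eqP e; move: tG; rewrite e; case/negP.
    by apply/imsetP; exists g.
- split.
  + apply/negPn/negP => wV.
    by case: (P2 fN hN wV ce) => e; [move: fce|move: tch]; rewrite -e ce.
  + apply/negP => /YsP[g gN we]; rewrite we in ce.
    case: (eqVneq f g) => [fg|fg]; first by move: ce; rewrite fg (negbTE (cedge_irr _ _)).
    exact: (P1 fN gN hN fg ce).
  + move=> g gN we; rewrite we in ce.
    case: (boolP (g \in Good h)) => gG; last by left; rewrite inE gN gG.
    right; apply: (G4I g (yN f) gG (cedge_sym ce)).
    have fg : f != g by apply: contraNneq fG => ->.
    by rewrite (yy_ne fN gN fg) andbT; apply/orP; right; apply/YsP; exists f.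
Qed.

Lemma TS_nadj t t' : t \in T :\: S -> t' \in T :\: S -> t != t' -> ~~ cedge col c t t'.
Proof.
move=> tT t'T tt'; apply/negP => ce.
have [_ th tch tC] := TSP tT; have [_ th' tch' tC'] := TSP t'T.
have UY u f : u != vN h -> u \notin VMM -> f \in N -> ~~ cedge col c (yN f) (vN f) ->
   cedge col c (yN f) u -> False.
  move=> uh uV fN fce ce'; case: (P2 fN hN uV ce') => e.
  - by move: fce; rewrite -e ce'.
  - by move: uh; rewrite e eqxx.
case: tC => [/andP[tV _]|[f fN [_ fce et]]]; case: tC' => [/andP[tV' _]|[f' fN' [_ fce' et']]].
- by case: (P3 hN tV tV' ce) => e; [move: th|move: th']; rewrite e eqxx.
- by apply: (UY t f') => //; rewrite -et' cedge_sym.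
- by apply: (UY t' f) => //; rewrite -et.
- case: (eqVneq f f') => [ff|ff]; first by move: tt'; rewrite et et' ff eqxx.
  by apply: (P1 fN fN' hN ff); rewrite -et -et'.
Qed.

Lemma TpS_le : (#|T :\: S| <= #|Bad h| + #|G4 h| + #|Zs|)%N.
Proof.
have inj : {in T :\: S &, injective psi}.
  move=> t t' tT t'T e; apply/eqP; apply/negPn/negP => tt'.
  have [tP _ _ _] := TSP tT; have [t'P _ _ _] := TSP t'T.
  have ce : cedge col c t t'.
    apply: (cedge_trans (psiP tP)) => //; rewrite e; exact: cedge_sym (psiP t'P).
  by move: (TS_nadj tT t'T tt'); rewrite ce.
rewrite -(card_in_imset inj).
have sub : psi @: (T :\: S) \subset (xN @: (Bad h :|: G4 h)) :|: Zs.
  apply/subsetP => w /imsetP[t tT ->].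
  have [tP _ _ _] := TSP tT.
  have [wV wY wX] := nbr_prop tT (psiP tP).
  rewrite inE; case: (boolP (psi t \in Xs)) => [/XsP[g gN eg]|nX].
    apply/orP; left; apply/imsetP; exists g => //.
    by rewrite inE; case: (wX g gN eg) => ->; rewrite ?orbT.
  by apply/orP; right; rewrite /Zs inE wV inE negb_or nX wY.
apply: leq_trans (subset_leq_card sub) _.
apply: leq_trans (cardU_le _ _) _; rewrite leq_add2r.
apply: leq_trans (leq_imset_card _ _) _; exact: cardU_le.
Qed.

Lemma count_h : (#|P| + #|Bad h| <= 3 * #|N| + #|G4 h| + 2 * #|Zs| + 3)%N.
Proof.
have sub : P \subset T :|: (vN @: Good h) :|: (yN @: Good h) :|: Xs :|: Zs.
  apply/subsetP => t tP; rewrite !inE.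
  case: (boolP (t \in VMM)) => tV /=.
    case: (boolP (t \in Xs)) => tX; first by rewrite !orbT.
    case: (boolP (t \in Ys)) => [/YsP[f fN ef]|tY].
      case: (boolP (f \in Good h)) => fG.
        have H : t \in yN @: Good h by apply/imsetP; exists f.
        by rewrite H !orbT.
      have H : t \in yN @: Bad h by apply/imsetP; exists f => //; rewrite inE fG.
      by rewrite tP H !orbT.
    by apply/orP; right.
  case: (boolP (t \in vN @: Good h)) => tG; first by rewrite !orbT.
  by rewrite tP.
have cGB : (#|Good h| + #|Bad h| = #|N|)%N.
  have sG : Good h \subset N by apply/subsetP => f; rewrite inE => /andP[].
  by rewrite /Bad cardsD (setIidPr sG) addnC subnK // subset_leq_card.
have cT : (#|T| <= #|Bad h| + #|G4 h| + #|Zs| + 3)%N.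
  rewrite -(cardsID S T) addnC; apply: leq_add TpS_le _; exact: TS_le.
have cX : (#|Xs| <= #|N|)%N by exact: leq_imset_card.
have cv : (#|vN @: Good h| <= #|Good h|)%N by exact: leq_imset_card.
have cy : (#|yN @: Good h| <= #|Good h|)%N by exact: leq_imset_card.
have := subset_leq_card sub.
have u1 := cardU_le (T :|: (vN @: Good h) :|: (yN @: Good h) :|: Xs) Zs.
have u2 := cardU_le (T :|: (vN @: Good h) :|: (yN @: Good h)) Xs.
have u3 := cardU_le (T :|: (vN @: Good h)) (yN @: Good h).
have u4 := cardU_le T (vN @: Good h).
lia.
Qed.

End Count.

Lemma G4_few g : g \in N -> (#|[set h in N | g \in G4 h]| <= 2)%N.
Proof.
move=> gN.
case: (set_0Vmem [set h in N | g \in G4 h]) => [->|[h0]]; first by rewrite cards0.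
rewrite inE => /andP[h0N]; rewrite /G4 inE => /andP[gG /existsP[w0 /andP[ce0 cond]]].
have sub : [set h in N | g \in G4 h] \subset h0 |: [set k in N | vN k == w0].
  apply/subsetP => k; rewrite !inE => /and3P[kN /andP[_ ck] _].
  case: (eqVneq k h0) => [//|kh0] /=; rewrite kN /=.
  case/orP: cond => [/andP[/andP[w0V w0g] w0h]|/andP[/YsP[g' g'N ew] w0g]].
  - apply/negPn/negP => kw; apply: (P4a gN h0N kN _ w0V w0g w0h _ ce0 ck).
    + by rewrite eq_sym.
    + by rewrite eq_sym.
  - exfalso; rewrite ew in ce0 w0g.
    have g'g : g' != g by apply: contraNneq w0g => ->.
    by apply: (P4b gN h0N kN g'N _ g'g ce0 ck); rewrite eq_sym.
apply: leq_trans (subset_leq_card sub) _.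
rewrite cardsU1 -[2]/(1+1)%N; apply: leq_add; first by case: (_ \notin _).
apply: card_le1 => x y; rewrite !inE => /andP[xN /eqP ex] /andP[yN /eqP ey].
apply/eqP; apply/negPn/negP => xy; by move: (vv_ne xN yN xy); rewrite ex ey eqxx.
Qed.

Lemma sum_card (T : finType) (A : {set T}) (Pr : pred T) :
  \sum_(x in A) (Pr x : nat) = #|[set x in A | Pr x]|.
Proof.
transitivity (\sum_(x in A | Pr x) 1)%N.
  by rewrite big_mkcondr /=; apply: eq_bigr => x _; case: (Pr x).
by rewrite -sum1_card; apply: eq_bigl => x; rewrite inE.
Qed.

Lemma card_sub_sum (T : finType) (A B : {set T}) : A \subset B ->
  #|A| = \sum_(x in B) (x \in A : nat).
Proof.
move=> sAB; rewrite sum_card; apply: eq_card => x; rewrite inE.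
by case: (boolP (x \in A)) => xA; rewrite ?andbF ?andbT // (subsetP sAB).
Qed.

Lemma sum_G4 : (\sum_(h in N) #|G4 h| <= 2 * #|N|)%N.
Proof.
have e : \sum_(h in N) #|G4 h| = \sum_(h in N) \sum_(g in N) (g \in G4 h : nat).
  apply: eq_bigr => h _; apply: card_sub_sum.
  by apply/subsetP => g; rewrite !inE => /andP[/andP[]].
rewrite e exchange_big /= mulnC -sum_nat_const.
apply: leq_sum => g gN; rewrite sum_card; exact: G4_few.
Qed.


Lemma MN_eq : M_N M N = eN @: N.
Proof.
apply/setP => e; apply/idP/idP.
- rewrite inE => /andP[eM /existsP[f /andP[fN /set0Pn[z]]]].
  rewrite inE => /andP[zf ze]; apply/imsetP; exists f => //.
  move: zf; rewrite {1}(f_eq fN) !inE => /orP[]/eqP ez.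
  + by move: (vN_notin fN); rewrite -ez (_ : z \in VMM) //; apply/VMP; exists e.
  + by apply: (M_inj_v eM (eN_in fN) ze); rewrite ez xN_eN.
- case/imsetP => f fN ->; rewrite inE eN_in //=; apply/existsP; exists f; rewrite fN /=.
  by apply/set0Pn; exists (xN f); rewrite inE xN_f // xN_eN.
Qed.

Lemma CN_eq : C_N M N = cN @: N.
Proof. by rewrite /C_N /colsM MN_eq -imset_comp. Qed.

Lemma cN_inj_in : {in N &, injective cN}.
Proof.
move=> f g fN gN e; apply/eqP; apply/negPn/negP => fg.
by move: (cN_inj fN gN fg); rewrite e eqxx.
Qed.

Lemma CN_card : #|C_N M N| = #|N|.
Proof. by rewrite CN_eq (card_in_imset cN_inj_in). Qed.

Lemma Gamma_card g : #|[set h in N | cedge col (cN h) (yN g) (vN g)]| =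
  #|cols_between col (C_N M N) (vN g) (yN g)|.
Proof.
rewrite -(card_in_imset (f:=cN) (D:=[set h in N | cedge col (cN h) (yN g) (vN g)])).
  apply: eq_card => c; rewrite /cols_between CN_eq !inE; apply/imsetP/andP.
  - case=> h; rewrite inE => /andP[hN ce] ->; split; first by apply/imsetP; exists h.
    exact: cedge_sym.
  - case=> /imsetP[h hN ->] ce; exists h => //; rewrite inE hN; exact: cedge_sym.
by move=> f f'; rewrite !inE => /andP[fN _] /andP[f'N _]; exact: cN_inj_in.
Qed.

Lemma sum_Bad : (\sum_(h in N) #|Bad h| + \sum_(g in N) #|cols_between col (C_N M N) (vN g) (yN g)|
   = #|N| * #|N|)%N.
Proof.
have e : \sum_(h in N) #|Bad h| = \sum_(h in N) \sum_(g in N) (g \in Bad h : nat).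
  apply: eq_bigr => h _; apply: card_sub_sum; exact: subsetDl.
rewrite e exchange_big /= -big_split /= -sum_nat_const.
apply: eq_bigr => g gN; rewrite sum_card -Gamma_card.
rewrite -(cardsID [set h in N | cedge col (cN h) (yN g) (vN g)] N) addnC; congr (_ + _)%N.
- apply: eq_card => h; rewrite !inE ?gN.
  by case: (h \in N); case: (cedge col (cN h) (yN g) (vN g)).
- apply: eq_card => h; rewrite !inE ?gN.
  by case: (h \in N); case: (cedge col (cN h) (yN g) (vN g)).
Qed.


Lemma card_bigcup_le (I : finType) (A : {set I}) (F : I -> {set V}) :
  (#|\bigcup_(i in A) F i| <= \sum_(i in A) #|F i|)%N.
Proof.
elim/big_rec2: _ => [|i x y _ le]; first by rewrite cards0.
by apply: leq_trans (cardU_le _ _) _; rewrite leq_add2l.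
Qed.

Lemma VM_card : (#|VMM| <= 2 * #|M|)%N.
Proof.
apply: leq_trans (card_bigcup_le _ _) _.
rewrite mulnC -sum_nat_const; apply: leq_sum => e eM.
by have /andP[/eqP -> _] := HMe eM.
Qed.

Lemma Zs_card : (#|Zs| + 2 * #|N| <= 2 * #|M|)%N.
Proof.
have sXY : Xs :|: Ys \subset VMM.
  by apply/subsetP => z; rewrite inE => /orP[/XsP[f fN ->]|/YsP[f fN ->]]; [exact: xN_in|exact: yN_in].
have cX : #|Xs| = #|N|.
  apply: card_in_imset => f g fN gN e; apply/eqP; apply/negPn/negP => fg.
  by move: (xx_ne fN gN fg); rewrite e eqxx.
have cY : #|Ys| = #|N|.
  apply: card_in_imset => f g fN gN e; apply/eqP; apply/negPn/negP => fg.
  by move: (yy_ne fN gN fg); rewrite e eqxx.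
have dXY : Xs :&: Ys = set0.
  apply/setP => z; rewrite !inE; apply/negP => /andP[/XsP[f fN ->] /YsP[g gN e]].
  by move: (xy_ne fN gN); rewrite e eqxx.
have cXY : #|Xs :|: Ys| = (2 * #|N|)%N by rewrite cardsU dXY cards0 subn0 cX cY addnn mul2n.
rewrite /Zs cardsD (setIidPr sXY) cXY.
have := subset_leq_card sXY; rewrite cXY => h1.
have := VM_card; lia.
Qed.

Lemma M_le_n : (#|M| <= n)%N.
Proof.
have inj : {in M &, injective (fun e : {set V} * 'I_n => e.2)}.
  move=> e e' eM e'M ec; apply/eqP; apply/negPn/negP => ne.
  by move: (HMc eM e'M ne); rewrite ec eqxx.
rewrite -(card_in_imset inj); apply: leq_trans (max_card _) _; by rewrite card_ord.
Qed.

Lemma N_le_M : (#|N| <= #|M|)%N.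
Proof.
have inj : {in N &, injective eN}.
  move=> f g fN gN e; apply/eqP; apply/negPn/negP => fg.
  by move: (eN_inj fN gN fg); rewrite e eqxx.
rewrite -(card_in_imset inj); apply: subset_leq_card; apply/subsetP => e /imsetP[f fN ->].
exact: eN_in.
Qed.

Lemma sum_count : (\sum_(h in N) #|cover (col (cN h))| + \sum_(h in N) #|Bad h|
   <= #|N| * (3 * #|N| + 2 * #|Zs| + 3) + 2 * #|N|)%N.
Proof.
rewrite -big_split /=.
apply: leq_trans (_ : \sum_(h in N) (3 * #|N| + #|G4 h| + 2 * #|Zs| + 3) <= _)%N.
  by apply: leq_sum => h hN; exact: count_h.
rewrite big_split /= big_split /= big_split /= !sum_nat_const.
have hG := sum_G4; rewrite !mulnDr.
have H (a s b c q : nat) : (s <= q -> a + s + b + c <= a + b + c + q)%N by lia.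
exact: H.
Qed.


Lemma Nalpha_prop (R : realType) (alpha : R) f : f \in N_alpha col M N alpha ->
  f \in N /\ (#|cols_between col (C_N M N) (vN f) (yN f)|%:R <= alpha * #|C_N M N|%:R)%R.
Proof.
rewrite inE => /andP[fN /existsP[e /andP[eMN /existsP[x /existsP[y /existsP[v H]]]]]].
case/and5P: H => /eqP ee xy /eqP ef vV ineq.
have eM : e \in M by move: eMN; rewrite inE => /andP[].
have xV : x \in VMM by apply/VMP; exists e => //; rewrite ee !inE eqxx.
have vf : v \in f by rewrite ef !inE eqxx.
have xf : x \in f by rewrite ef !inE eqxx orbT.
have ev : v = vN f.
  move: vf; rewrite {1}(f_eq fN) !inE => /orP[/eqP //|/eqP evx].
  by move: vV; rewrite evx xN_in.
have ex : x = xN f.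
  move: xf; rewrite {1}(f_eq fN) !inE => /orP[/eqP evx|/eqP //].
  by move: (vN_notin fN); rewrite -evx xV.
have eeN : e = eN f.
  apply: (M_inj_v (x:=x) eM (eN_in fN)); first by rewrite ee !inE eqxx.
  by rewrite ex; exact: xN_eN.
have ey : y = yN f.
  have : y \in (eN f).1 by rewrite -eeN ee !inE eqxx orbT.
  rewrite (proj1 (yN_prop fN)) !inE => /orP[/eqP eyx|/eqP //].
  by move: xy; rewrite ex eyx eqxx.
by split => //; rewrite -ev -ey.
Qed.


Lemma final_bound (R : realType) (gamma alpha : R) :
  (0 < gamma)%R -> (0 < alpha)%R -> (alpha < 1)%R -> (1 < gamma * n%:R)%R ->
  (forall c, (3 - gamma) * n%:R <= #|cover (col c)|%:R)%R ->
  ((1 - gamma) * #|M|%:R <= #|N|%:R)%R -> (0 < #|N|)%N ->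
  (#|N_alpha col M N alpha|%:R <= 20 * gamma / (1 - alpha) * n%:R)%R.
Proof.
move=> g0 a0 a1 gn Hcov Hp p0.
have F1 := sum_count. have F2 := sum_Bad. have F3 := Zs_card.
have F4 := M_le_n. have F5 := N_le_M.
set p := #|N| in F1 F2 F3 F5 p0 Hp *.
set SP := (\sum_(h in N) #|cover (col (cN h))|)%N in F1.
set SB := (\sum_(h in N) #|Bad h|)%N in F1 F2.
set SG := (\sum_(g in N) #|cols_between col (C_N M N) (vN g) (yN g)|)%N in F2.
set a := #|N_alpha col M N alpha|.
set z := #|Zs| in F1 F3.
set m := #|M| in F3 F4 F5 Hp.
have R1 : (p%:R * ((3 - gamma) * n%:R) <= SP%:R :> R)%R.
  rewrite /SP natr_sum mulr_natl -sumr_const.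
  by apply: ler_sum => h _; exact: Hcov.
have Na_sub : N_alpha col M N alpha \subset N.
  by apply/subsetP => f /(Nalpha_prop (alpha:=alpha)) [].
have R2 : (SG%:R <= p%:R * p%:R - (1 - alpha) * p%:R * a%:R :> R)%R.
  have ea : (a%:R = \sum_(g in N) ((g \in N_alpha col M N alpha : nat)%:R : R))%R.
    by rewrite -natr_sum -card_sub_sum.
  apply: (le_trans (y := \sum_(g in N) (p%:R - (1 - alpha) * p%:R * ((g \in N_alpha col M N alpha : nat)%:R)))%R); last first.
    rewrite sumrB sumr_const -mulr_sumr -ea mulr_natr [X in (_ <= X - _)%R]mulr_natr; exact: lexx.
  rewrite /SG natr_sum; apply: ler_sum => g gN.
  have cle : (#|cols_between col (C_N M N) (vN g) (yN g)| <= p)%N.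
    rewrite /p -CN_card; apply: subset_leq_card; apply/subsetP => c; rewrite inE => /andP[].
    done.
  case: (boolP (g \in N_alpha col M N alpha)) => gA /=.
    have [_ H] := Nalpha_prop gA; rewrite CN_card -/p in H.
    apply: le_trans H _; rewrite mulr1; lra.
  rewrite mulr0 subr0; by rewrite ler_nat.
have F1R : ((SP + SB)%:R <= (p * (3 * p + 2 * z + 3) + 2 * p)%:R :> R)%R by rewrite ler_nat.
have F2R : ((SB + SG)%:R = (p * p)%:R :> R)%R by rewrite F2.
have F3R : ((z + 2 * p)%:R <= (2 * m)%:R :> R)%R by rewrite ler_nat.
have F4R : (m%:R <= n%:R :> R)%R by rewrite ler_nat.
have F5R : (p%:R <= m%:R :> R)%R by rewrite ler_nat.
have p0R : (0 < p%:R :> R)%R by rewrite ltr0n.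
rewrite !natrD !natrM in F1R F2R F3R.
have S1 : (p%:R * ((3 - gamma) * n%:R + (1 - alpha) * a%:R) <=
            p%:R * (3 * p%:R + 2 * z%:R + 5) :> R)%R.
  rewrite !mulrDr; move: F1R F2R R1 R2; rewrite ?mulrDr ?mulrA; lra.
have S2 : ((3 - gamma) * n%:R + (1 - alpha) * a%:R <= 3 * p%:R + 2 * z%:R + 5 :> R)%R.
  by move: S1; rewrite ler_pM2l.
have gmn : (gamma * m%:R <= gamma * n%:R :> R)%R by rewrite ler_wpM2l // ltW.
have key2 : ((1 - alpha) * a%:R <= 20 * gamma * n%:R :> R)%R.
  move: S2 Hp F3R; rewrite !mulrBl !mul1r; lra.
rewrite mulrAC ler_pdivlMr ?subr_gt0 // mulrC; exact: key2.
Qed.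

End Comb.

Unset Implicit Arguments.
Local Open Scope ring_scope.

Theorem lemma2p9 (R : realType) (gamma alpha : R) :
  0 < gamma -> 0 < alpha -> alpha < 1 ->
  exists n0 : nat, forall n : nat, (n0 <= n)%N ->
  forall (V : finType) (col : 'I_n -> {set {set V}})
         (M : {set {set V} * 'I_n}) (N : {set {set V}}),
    nv_multigraph col ((3 - gamma) * n%:R) ->
    is_max_rainbow_matching col M ->
    aux_matching col M 7 N ->
    (1 - gamma) * #|M|%:R <= #|N|%:R ->
    #|N_alpha col M N alpha|%:R <= 20 * gamma / (1 - alpha) * n%:R.
Proof.
move=> g0 a0 a1.
have gi0 : 0 <= gamma^-1 by rewrite invr_ge0 ltW.
exists (Num.Def.archi_bound gamma^-1).
move=> n n0n V col M N Hnv HM HN Hp.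
have gn : 1 < gamma * n%:R.
  have hb := archi_boundP gi0.
  have hn : gamma^-1 < n%:R by apply: lt_le_trans hb _; rewrite ler_nat.
  rewrite [X in X < _](_ : 1 = gamma * gamma^-1); last by rewrite mulfV // lt0r_neq0.
  by rewrite ltr_pM2l.
have Htriv c : trivIset (col c) by case: (Hnv c).
have Hsz c K : K \in col c -> (2 <= #|K|)%N by case: (Hnv c) => _ H _; exact: H.
have Hcov c : (3 - gamma) * n%:R <= #|cover (col c)|%:R by case: (Hnv c).
case: (set_0Vmem N) => [N0|[f0 f0N]].
  have -> : N_alpha col M N alpha = set0.
    by apply/setP => f; rewrite inE N0 inE.
  rewrite cards0; apply: mulr_ge0; last by rewrite ler0n.
  apply: divr_ge0; first by apply: mulr_ge0; [rewrite ler0n|exact: ltW].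
  by rewrite subr_ge0 ltW.
have HN' := HN; case: HN' => H1 _ _.
have [u [w [ef uV wV _]]] := H1 f0 f0N.
have /bigcupP[e eM _] := wV.
apply: (final_bound u e Htriv Hsz HM HN) => //.
by apply/card_gt0P; exists f0.
Qed.
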